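(* Let $\mathcal{H}$ be a real Hilbert space and let $C\subset\mathcal{H}$ be a nonempty, closed and convex set with $0\in C$. Then a function $f\in\Gamma_0(\mathcal{H})$ satisfies $$\Vert \operatorname{prox}_f(x)\Vert = d_C(x)\quad\text{for all } x\in\mathcal{H}$$ if and only if $f=\sigma_C+c$ for some constant $c\in\mathbb{R}$.
   Context: $\Gamma_0(\mathcal{H})$ denotes the set of proper, convex, lower semicontinuous functions $\mathcal{H}\to\mathbb{R}\cup\{+\infty\}$. $\operatorname{prox}_f(x)=\operatorname{argmin}_{y\in\mathcal{H}}\{f(y)+\tfrac12\Vert x-y\Vert^2\}$. $d_C(x)=\inf_{c\in C}\Vert x-c\Vert$ is the distance function to $C$, and $\sigma_C(x)=\sup_{y\in C}\langle y,x\rangle$ is the support function of $C$. *)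

(* Defs.v *)
From HB Require Import structures.
From mathcomp Require Import all_boot all_order all_algebra.
From mathcomp Require Import all_classical all_reals all_analysis.
Set Implicit Arguments.
Unset Strict Implicit.
Unset Printing Implicit Defensive.
Import Order.TTheory GRing.Theory Num.Theory.
Import numFieldNormedType.Exports.
Local Open Scope classical_set_scope.
Local Open Scope ring_scope.

(* A real Hilbert space: a complete normed space over R whose norm comes
   from an inner product (symmetric, linear in the first argument,
   <x,x> = |x|^2; positive definiteness follows from the norm). *)
Record inner_product (R : realType) (H : completeNormedModType R) := InnerProduct {
  ip :> H -> H -> R ;
  ip_sym : forall x y, ip x y = ip y x ;
  ip_linl : forall (a : R) x y z, ip (a *: x + y) z = a * ip x z + ip y z ;
  ip_normE : forall x, ip x x = `|x| ^+ 2
}.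

Section defs.
Context {R : realType} {H : completeNormedModType R}.
Local Open Scope ereal_scope.

Definition proper_fun (f : H -> \bar R) :=
  (forall x, f x != -oo) /\ (exists x, f x != +oo).

Definition convex_efun (f : H -> \bar R) :=
  forall (x y : H) (t : R), (0 < t < 1)%R ->
    f (t *: x + (1 - t) *: y)%R <= t%:E * f x + (1 - t)%:E * f y.

Definition Gamma0 (f : H -> \bar R) :=
  [/\ proper_fun f, convex_efun f & lower_semicontinuous f].

(* prox_f(x) = argmin_y { f y + 1/2 |x - y|^2 } (chosen via [get]; for
   f in Gamma0 the minimizer exists and is unique) *)
Definition prox (f : H -> \bar R) (x : H) : H :=
  get [set p : H | forall y : H,
        f p + ((2^-1) * `|x - p| ^+ 2)%R%:E <= f y + ((2^-1) * `|x - y| ^+ 2)%R%:E].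

Definition dist_set (C : set H) (x : H) : R :=
  inf [set `|x - c|%R | c in C].

Definition support_fun (ipH : inner_product H) (C : set H) (x : H) : \bar R :=
  ereal_sup [set (ipH y x)%:E | y in C].

Definition convex_subset (C : set H) :=
  forall x y (t : R), C x -> C y -> (0 <= t <= 1)%R -> C (t *: x + (1 - t) *: y)%R.
End defs.

(* Main.v *)
Require Import Defs.
From HB Require Import structures.
From mathcomp Require Import all_boot all_order all_algebra.
From mathcomp Require Import all_classical all_reals all_analysis.
From mathcomp Require Import ring lra.
Import Order.TTheory GRing.Theory Num.Theory.
Import numFieldNormedType.Exports.
Local Open Scope classical_set_scope.
Local Open Scope ring_scope.
Section S.
Variables (R : realType) (H : completeNormedModType R) (ipH : inner_product H).

Lemma ipDl x y z : ipH (x + y) z = ipH x z + ipH y z.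
Proof. by have := ip_linl ipH 1 x y z; rewrite scale1r mul1r. Qed.
Lemma ip0l z : ipH 0 z = 0.
Proof. by have := ipDl 0 0 z; rewrite addr0 => /(congr1 (fun t => t - ipH 0 z)); rewrite addrK subrr. Qed.
Lemma ipZl a x z : ipH (a *: x) z = a * ipH x z.
Proof. by have := ip_linl ipH a x 0 z; rewrite addr0 ip0l addr0. Qed.
Lemma ipNl x z : ipH (- x) z = - ipH x z.
Proof. by rewrite -scaleN1r ipZl mulN1r. Qed.
Lemma ipBl x y z : ipH (x - y) z = ipH x z - ipH y z.
Proof. by rewrite ipDl ipNl. Qed.
Lemma ipDr x y z : ipH z (x + y) = ipH z x + ipH z y.
Proof. by rewrite !(ip_sym ipH z) ipDl. Qed.
Lemma ipZr a x z : ipH z (a *: x) = a * ipH z x.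
Proof. by rewrite !(ip_sym ipH z) ipZl. Qed.
Lemma ipNr x z : ipH z (- x) = - ipH z x.
Proof. by rewrite !(ip_sym ipH z) ipNl. Qed.
Lemma ipBr x y z : ipH z (x - y) = ipH z x - ipH z y.
Proof. by rewrite !(ip_sym ipH z) ipBl. Qed.
Lemma ip0r z : ipH z 0 = 0.
Proof. by rewrite ip_sym ip0l. Qed.

Ltac ipexp := rewrite ?(ipDl, ipDr, ipBl, ipBr, ipZl, ipZr, ipNl, ipNr, ip0l, ip0r).

Lemma nrm2 (x : H) : `|x| ^+ 2 = ipH x x.
Proof. by rewrite ip_normE. Qed.

Lemma nrmD2 (u v : H) : `|u + v| ^+ 2 = `|u| ^+ 2 + 2 * ipH u v + `|v| ^+ 2.
Proof. rewrite !nrm2; ipexp; rewrite (ip_sym ipH v u); ring. Qed.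
Lemma nrmB2 (u v : H) : `|u - v| ^+ 2 = `|u| ^+ 2 - 2 * ipH u v + `|v| ^+ 2.
Proof. rewrite !nrm2; ipexp; rewrite (ip_sym ipH v u); ring. Qed.
Lemma nrmZ2 (a : R) (u : H) : `|a *: u| ^+ 2 = a ^+ 2 * `|u| ^+ 2.
Proof. rewrite !nrm2; ipexp; ring. Qed.

Lemma combo_eq (x w p : H) (t : R) :
  `|x - (t *: w + (1 - t) *: p)| ^+ 2 =
  `|x - p| ^+ 2 - 2 * t * ipH (x - p) (w - p) + t ^+ 2 * `|w - p| ^+ 2.
Proof.
rewrite !nrm2; ipexp.
rewrite (ip_sym ipH w x) (ip_sym ipH p x) (ip_sym ipH p w); ring.
Qed.

Definition isprox (f : H -> \bar R) x p := forall y,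
  (f p + ((2^-1) * `|x - p| ^+ 2)%R%:E <= f y + ((2^-1) * `|x - y| ^+ 2)%R%:E)%E.

Lemma subgrad f x p fp : (forall y, f y != -oo%E) -> convex_efun f -> isprox f x p ->
  f p = fp%:E -> forall w, ((fp + ipH (x - p) (w - p))%:E <= f w)%E.
Proof.
move=> fN cvx hp fpE w.
case Efw: (f w) => [fw| |]; [|by rewrite leey| by have := fN w; rewrite Efw].
rewrite lee_fin.
set N := `|w - p| ^+ 2; set I := ipH (x - p) (w - p).
have N0 : (0 <= N)%R by rewrite /N exprn_ge0.
have key : forall t : R, (0 < t < 1)%R -> (fp <= fw - I + t / 2 * N)%R.
  move=> t /andP[t0 t1].
  have := hp (t *: w + (1 - t) *: p).
  have := cvx w p t; rewrite t0 t1 => /(_ isT); rewrite Efw fpE -!EFinM -EFinD.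
  case: (f _) => [fz| |] //=.
  rewrite -!EFinD !lee_fin combo_eq -/N -/I => h1 h2.
  have h3 : (t * fp <= t * (fw - I + t / 2 * N))%R by nra.
  by rewrite ler_pM2l in h3.
rewrite leNgt; apply/negP => hlt.
set d := (fp - fw + I)%R.
have d0 : (0 < d)%R by rewrite /d; lra.
set t := (d / (2 * d + N))%R.
have den0 : (0 < 2 * d + N)%R by lra.
have e : (t * (2 * d + N) = d)%R by rewrite /t divfK // gt_eqF.
have tN : (t * N = d - 2 * d * t)%R.
  by rewrite -{1}e; ring.
have t0 : (0 < t)%R by rewrite /t divr_gt0.
have dt0 : (0 < d * t)%R by rewrite mulr_gt0.
have t1 : (t < 1)%R by rewrite /t ltr_pdivrMr //; lra.
have := key t; rewrite t0 t1 => /(_ isT).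
have -> : (t / 2 * N = (d - 2 * d * t) / 2)%R by rewrite -tN; ring.
rewrite /d in dt0 *; lra.
Qed.


Lemma combo_eq2 (x a b : H) (t : R) :
  `|x - (t *: a + (1 - t) *: b)| ^+ 2 =
  t * `|x - a| ^+ 2 + (1 - t) * `|x - b| ^+ 2 - t * (1 - t) * `|a - b| ^+ 2.
Proof.
rewrite !nrm2; ipexp.
rewrite (ip_sym ipH a x) (ip_sym ipH b x) (ip_sym ipH b a); ring.
Qed.

Lemma small_inv {eps : R} : 0 < eps -> exists N : nat, N.+1%:R^-1 < eps.
Proof.
move=> e0; exists (Num.trunc eps^-1).
by rewrite -ltf_pV2 ?(posrE,divr_gt0, invr_gt0)// invrK truncnS_gt.
Qed.

Lemma inv_mono {n N : nat} : (N <= n)%N -> n.+1%:R^-1 <= N.+1%:R^-1 :> R.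
Proof. by move=> Nn; rewrite lef_pV2 ?posrE ?ltr0Sn // ler_nat ltnS. Qed.

Lemma lin_lb (f : H -> \bar R) : Gamma0 f -> exists A B : R, 0 <= B /\ forall y, ((A - B * `|y|)%:E <= f y)%E.
Proof.
case=> [[fN [x0 fx0]] cvx lsc].
case E0: (f x0) => [a0| |]; [| by rewrite E0 in fx0 | by have := fN x0; rewrite E0].
have : ((a0 - 1)%:E < f x0)%E by rewrite E0 lte_fin; lra.
move=> /lsc[V nV fV].
move: nV => /nbhs_ballP[r /= r0 rV].
have r2 : 0 < 2 / r by rewrite divr_gt0.
exists (a0 - 1 - 2 / r * `|x0|), (2 / r); split; first exact: ltW.
move=> y.
suff: ((a0 - 1 - 2 / r * `|y - x0|)%:E <= f y)%E.
  apply: le_trans; rewrite lee_fin.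
  have := ler_normB y x0 => h.
  have : 2 / r * `|y - x0| <= 2 / r * (`|y| + `|x0|) by rewrite ler_wpM2l // ltW.
  rewrite mulrDr; lra.
case Efy: (f y) => [fy| |]; [| by rewrite leey | by have := fN y; rewrite Efy].
rewrite lee_fin.
have K0 : 0 <= 2 / r * `|y - x0| by rewrite mulr_ge0 // ltW.
have [ylt|yge] := ltP `|y - x0| r.
  have : ball x0 r y by rewrite -ball_normE /= distrC.
  move/rV/fV; rewrite Efy lte_fin; lra.
set D := `|y - x0| in yge K0 *.
have D0 : 0 < D by apply: lt_le_trans yge.
set t := r / (2 * D).
have t0 : 0 < t by rewrite /t divr_gt0 // mulr_gt0.
have t1 : t < 1 by rewrite /t ltr_pdivrMr ?mulr_gt0 //; lra.
have tK : t * (2 / r * D) = 1.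
  by rewrite /t; field; rewrite !gt_eqF.
have hz : ball x0 r (t *: y + (1 - t) *: x0).
  rewrite -ball_normE /=.
  have e := combo_eq2 x0 y x0 t.
  rewrite subrr normr0 expr0n /= mulr0 addr0 (distrC x0 y) -/D in e.
  have tD : t * D = r / 2.
    by rewrite /t; field; rewrite gt_eqF.
  have n0 := normr_ge0 (x0 - (t *: y + (1 - t) *: x0)).
  set u := `|_| in e n0 *.
  have : u ^+ 2 = (r / 2) ^+ 2 by rewrite e -tD; ring.
  move=> {}e; nra.
have := cvx y x0 t; rewrite t0 t1 => /(_ isT).
move: hz => /rV/fV.
case: (f _) => [fz| |] //=; rewrite Efy E0 -!EFinM -EFinD.
- by rewrite lte_fin lee_fin => h1 h2; nra.
- by move=> _; rewrite leye_eq.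
Qed.

Lemma arith1 {m fz rn rk A1 A2 A3 en ek : R} :
  m <= fz + 2^-1 * (2^-1 * A1 + (1 - 2^-1) * A2 - 2^-1 * (1 - 2^-1) * A3) ->
  fz <= 2^-1 * (rn - 2^-1 * A1) + (1 - 2^-1) * (rk - 2^-1 * A2) ->
  rn < m + en -> rk < m + ek -> A3 <= 4 * (en + ek).
Proof. lra. Qed.

Lemma arith2 {A en eN E : R} : A <= 4 * (eN + en) -> en <= eN -> eN < E / 8 -> A < E.
Proof. lra. Qed.
Lemma arith3 {r m en eN D : R} : r < m + en -> en <= eN -> eN < D -> r < m + D.
Proof. lra. Qed.
Lemma arith4 {r m P Y d : R} : m - 2^-1 * P + d < r - 2^-1 * Y -> P - d < Y ->
  r < m + d / 2 -> False.
Proof. lra. Qed.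

Lemma exist_prox (f : H -> \bar R) x : Gamma0 f -> exists p, isprox f x p.
Proof.
move=> G; have [A [B [B0 hAB]]] := lin_lb f G.
case: G => [[fN [x0 fx0]] cvx lsc].
pose g (y : H) := 2^-1 * `|x - y| ^+ 2.
pose hx y := (f y + (g y)%:E)%E.
pose K := A - B * `|x| - B ^+ 2 / 2.
have hK : forall y fy, f y = fy%:E -> K <= fy + g y.
  move=> y fy E; have := hAB y; rewrite E lee_fin => h.
  have h2 : `|y| <= `|x| + `|x - y|.
    by have := ler_distD x y 0; rewrite !subr0 distrC addrC.
  have h3 : B * `|y| <= B * (`|x| + `|x - y|) by rewrite ler_wpM2l.
  have h4 := sqr_ge0 (B - `|x - y|).
  rewrite /K /g; nra.
pose S := [set r : R | exists y, hx y = r%:E].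
case E0: (f x0) => [a0| |]; [| by rewrite E0 in fx0 | by have := fN x0; rewrite E0].
have S0 : S (a0 + g x0) by exists x0; rewrite /hx E0.
have lbS : lbound S K.
  move=> r [y]; rewrite /hx; case Ey: (f y) => [fy| |] //= [<-].
  exact: hK.
have infS : has_inf S by split; [exists (a0 + g x0) | exists K].
pose m := inf S.
have hm : forall y, (m%:E <= hx y)%E.
  move=> y; rewrite /hx; case Ey: (f y) => [fy| |] /=.
  - rewrite lee_fin; apply: ge_inf; first by exists K.
    by exists y; rewrite /hx Ey.
  - by rewrite leey.
  - by have := fN y; rewrite Ey.
have seq_ex : forall n : nat, exists y, exists2 r, hx y = r%:E & r < m + n.+1%:R^-1.
  move=> n; have e0 : 0 < n.+1%:R^-1 :> R by rewrite invr_gt0 ltr0Sn.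
  have [r [y Ey] rlt] := inf_adherent e0 infS.
  by exists y, r.
have [yy hyy] := choice seq_ex.
pose rr n := fine (hx (yy n)).
have hrr : forall n, hx (yy n) = (rr n)%:E /\ rr n < m + n.+1%:R^-1.
  by move=> n; case: (hyy n) => r E rlt; rewrite /rr E.
have frr : forall n, f (yy n) = (rr n - g (yy n))%:E.
  move=> n; have [E _] := hrr n; move: E; rewrite /hx.
  by case: (f (yy n)) => [fy| |] //= [<-]; rewrite addrK.
have mrr : forall n, m <= rr n.
  by move=> n; have := hm (yy n); rewrite (proj1 (hrr n)) lee_fin.
have cau : forall n k, `|yy n - yy k| ^+ 2 <= 4 * (n.+1%:R^-1 + k.+1%:R^-1).
  move=> n k.
  set a := yy n; set b := yy k.
  have := cvx a b 2^-1.
  rewrite invr_gt0 ltr0Sn /= invf_lt1 ?ltr0Sn ?ltr1n // => /(_ isT).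
  rewrite frr frr -!EFinM -EFinD.
  have := hm (2^-1 *: a + (1 - 2^-1) *: b); rewrite /hx /g.
  case: (f _) => [fz| |] //=.
  rewrite -EFinD !lee_fin combo_eq2 => h1 h2.
  have [_ h3] := hrr n; have [_ h4] := hrr k.
  rewrite /a /b in h1 h2 *.
  exact: (arith1 h1 h2 h3 h4).
have cauchyY : cauchy (yy @ \oo).
  apply: cauchy_exP => e e0.
  have e8 : 0 < e * e / 8 by rewrite divr_gt0 ?mulr_gt0.
  have [N hN] := small_inv e8.
  exists (yy N).
  apply: filterS (nbhs_infty_ge N) => n Nn /=.
  rewrite -ball_normE /=.
  have h := arith2 (cau N n) (inv_mono Nn) hN.
  have n0 := normr_ge0 (yy N - yy n).
  nra.
have cv : cvg (yy @ \oo) by apply: cauchy_cvg.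
have [p yyp] : exists p : H, yy @ \oo --> p by exists (limn yy).
exists p => y.
apply: le_trans (hm y).
rewrite leNgt; apply/negP => hlt.
have [d d0 hd] : exists2 d, 0 < d & ((m - g p + d)%:E < f p)%E.
  move: hlt; rewrite /hx; case Ep: (f p) => [fp| |] //=.
  - rewrite -EFinD lte_fin => h.
    by exists ((fp + g p - m) / 2); rewrite ?lte_fin /g; lra.
  - by move=> _; exists 1; rewrite ?ltry.
have [V nV fV] := lsc p _ hd.
have ev1 : \forall n \near \oo, V (yy n)  by apply: yyp.
have c1 : (fun n => `|x - yy n|) @ \oo --> `|x - p|.
  by apply: cvg_norm; apply: cvgB => //; exact: cvg_cst.
have c2 : (fun n => `|x - yy n| * `|x - yy n|) @ \oo --> `|x - p| * `|x - p| by apply: cvgM.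
have hz : `|x - p| * `|x - p| - d < `|x - p| * `|x - p| by lra.
have ev2 : \forall n \near \oo, `|x - p| * `|x - p| - d < `|x - yy n| * `|x - yy n|.
  by apply: (cvgr_gt _ c2).
have d2 : 0 < d / 2 by rewrite divr_gt0.
have [N hN] := small_inv d2.
have ev3 : \forall n \near \oo, rr n < m + d / 2.
  apply: filterS (nbhs_infty_ge N) => n Nn.
  have [_ h] := hrr n; exact: (arith3 h (inv_mono Nn) hN).
have [n [[h1 h2] h3]] := filter_ex (filterI (filterI ev1 ev2) ev3).
have h2' : `|x - p| * `|x - p| - d < `|x - yy n| * `|x - yy n| := h2.
have := fV _ h1; rewrite frr lte_fin /g.
rewrite -!expr2 in h2' => h4; exact: (arith4 h4 h2' h3).
Qed.

Lemma prox_spec (f : H -> \bar R) x : Gamma0 f ->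
  isprox f x (prox f x) /\ exists fp, f (prox f x) = fp%:E.
Proof.
move=> G; have hp : isprox f x (prox f x).
  by rewrite /prox; apply: getPex; exact: exist_prox.
split => //.
case: G => [[fN [x0 fx0]] _ _].
have := hp x0; case E: (f (prox f x)) => [fp| |]; first by exists fp.
- by case: (f x0) fx0.
- by have := fN (prox f x); rewrite E.
Qed.

Lemma dist_le (C : set H) x z : C z -> dist_set C x <= `|x - z|.
Proof.
move=> Cz; apply: ge_inf; last by exists z.
by exists 0 => _ [c _ <-].
Qed.

Lemma dist_lb (C : set H) x a : C !=set0 -> (forall z, C z -> a <= `|x - z|) ->
  a <= dist_set C x.
Proof.
move=> [z0 Cz0] h; apply: lb_le_inf; first by exists `|x - z0|, z0.
by move=> _ [c Cc <-]; exact: h.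
Qed.

Lemma dist_adh (C : set H) x eps : C !=set0 -> 0 < eps ->
  exists2 z, C z & `|x - z| < dist_set C x + eps.
Proof.
move=> [z0 Cz0] e0.
have hi : has_inf [set `|x - c| | c in C].
  by split; [exists `|x - z0|, z0 | exists 0 => _ [c _ <-]].
by have [_ [z Cz <-] h] := inf_adherent e0 hi; exists z.
Qed.

Lemma sig_ub (C : set H) z w : C z -> ((ipH z w)%:E <= support_fun ipH C w)%E.
Proof. by move=> Cz; apply: ereal_sup_ubound; exists z. Qed.

Lemma sig_le (C : set H) w (M : \bar R) : (forall z, C z -> ((ipH z w)%:E <= M)%E) ->
  (support_fun ipH C w <= M)%E.
Proof. by move=> h; apply: ub_ereal_sup => _ [z Cz <-]; exact: h. Qed.

Lemma pyth (x p z : H) :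
  `|x - z| ^+ 2 = `|p| ^+ 2 + 2 * (ipH (x - p) p - ipH z p) + `|x - p - z| ^+ 2.
Proof.
rewrite !nrm2; ipexp.
rewrite (ip_sym ipH z x) (ip_sym ipH p x) (ip_sym ipH z p); ring.
Qed.

Definition iota (C : set H) (y : H) : \bar R := if `[< C y >] then 0%E else +oo%E.

Lemma iota_G0 (C : set H) : C !=set0 -> closed C -> convex_subset C -> Gamma0 (iota C).
Proof.
move=> [z0 Cz0] cC vC; split.
- split; first by move=> y; rewrite /iota; case: ifP.
  by exists z0; rewrite /iota asboolT.
- move=> a b t /andP[t0 t1]; rewrite /iota.
  have hy : forall u : H, iota C u != -oo%E by move=> u; rewrite /iota; case: ifP.
  case: (asboolP (C a)) => Ca; case: (asboolP (C b)) => Cb.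
  + rewrite asboolT; first by rewrite !mule0 adde0.
    by apply: vC => //; rewrite ltW // ltW.
  + rewrite mulry gtr0_sg ?subr_gt0 // mul1e mule0 add0e.
    exact: leey.
  + rewrite mulry gtr0_sg // mul1e mule0 addye //.
    exact: leey.
  + rewrite mulry gtr0_sg // mul1e addye; first exact: leey.
    by rewrite mulry gtr0_sg ?subr_gt0 // mul1e.
- move=> y a; rewrite /iota; case: (asboolP (C y)) => Cy ha.
  + exists setT; first exact: filterT.
    by move=> u _; case: ifP => _ //; rewrite ltry.
  + exists (~` C).
      by apply: open_nbhs_nbhs; split => //; exact: closed_openC.
    by move=> u /= nCu; rewrite asboolF // ltry.
Qed.

Lemma sep (C : set H) q : C !=set0 -> closed C -> convex_subset C ->
  (forall w, ((ipH q w)%:E <= support_fun ipH C w)%E) -> C q.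
Proof.
move=> C0 cC vC hq.
have G := iota_G0 C C0 cC vC.
have [hp [fp Efp]] := prox_spec (iota C) q G.
set P := prox (iota C) q in hp Efp.
have CP : C P by move: Efp; rewrite /iota; case: (asboolP (C P)).
have fp0 : fp = 0 by move: Efp; rewrite /iota asboolT // => -[].
have [[fN _] cvx _] := G.
have sg := subgrad _ _ _ _ fN cvx hp Efp.
have vi : forall z, C z -> ipH (q - P) (z - P) <= 0.
  by move=> z Cz; have := sg z; rewrite /iota asboolT // fp0 add0r lee_fin.
have := hq (q - P).
have := sig_le C (q - P) (ipH P (q - P))%:E.
have h : forall z, C z -> ((ipH z (q - P))%:E <= (ipH P (q - P))%:E)%E.
  move=> z Cz; rewrite lee_fin; have := vi z Cz.
  rewrite (ip_sym ipH (q - P)) ipBl; lra.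
move=> /(_ h) h1 h2; have := le_trans h2 h1; rewrite lee_fin => h3.
have : `|q - P| ^+ 2 <= 0 by rewrite nrm2 ipBl; lra.
move=> h4; have n0 := normr_ge0 (q - P).
have : `|q - P| <= 0 by nra.
by rewrite normr_le0 subr_eq0 => /eqP ->.
Qed.

Lemma ecomb {S : \bar R} {a b c : R} : (a%:E <= S + c%:E)%E -> (S <= b%:E)%E -> a <= b + c.
Proof.
case: S => [r| |] //=.
- by rewrite -EFinD !lee_fin; lra.
Qed.

Lemma arith5 {s c fz e fp cq qy Q : R} : fz <= e * fp + (1 - e) * c -> s + c < fz ->
  e * fp <= e * (c + cq) -> e * cq = qy - e * Q -> qy <= s -> 0 <= e * Q -> False.
Proof. move=> *; nra. Qed.

Lemma main (C : set H) (f : H -> \bar R) :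
  C !=set0 -> closed C -> convex_subset C -> C 0 -> Gamma0 f ->
  ((forall x : H, `|prox f x| = dist_set C x) <->
   (exists c : R, f = (fun x => (support_fun ipH C x + c%:E)%E))).
Proof.
move=> C0 cC vC C00 G.
have [[fN [x0 fx0]] cvx lsc] := G.
have PS := fun x => prox_spec f x G.
have SG := fun x p fp => subgrad f x p fp fN cvx.
split.
- move=> hyp.
  have p0 : forall z, C z -> prox f z = 0.
    move=> z Cz; apply/eqP; rewrite -normr_eq0 hyp; apply/eqP/le_anti/andP; split.
      by have := dist_le C z z Cz; rewrite subrr normr0.
    by apply: dist_lb => // w _; exact: normr_ge0.
  have [hp0 [c Ec]] := PS 0; rewrite p0 // in hp0 Ec.
  have L : forall z w, C z -> ((c + ipH z w)%:E <= f w)%E.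
    move=> z w Cz; have [hz [fz Efz]] := PS z; rewrite p0 // in hz Efz.
    have fzc : fz = c by move: Efz; rewrite Ec => -[].
    by have := SG z 0 fz hz Efz w; rewrite !subr0 fzc.
  have step2 : forall x, exists fp, [/\ f (prox f x) = fp%:E,
      fp <= c + ipH (x - prox f x) (prox f x),
      forall z, C z -> ipH z (prox f x) <= ipH (x - prox f x) (prox f x) &
      C (x - prox f x)].
    move=> x; have [hp [fp Efp]] := PS x.
    set p := prox f x in hp Efp *; set q := x - p.
    have a : fp <= c + ipH q p.
      by have := SG x p fp hp Efp 0; rewrite Ec lee_fin sub0r ipNr; lra.
    have b : forall z, C z -> ipH z p <= ipH q p.
      by move=> z Cz; have := L z p Cz; rewrite Efp lee_fin; lra.
    exists fp; split => //.
    have [//|nCq] := pselect (C q).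
    have : nbhs q (~` C) by apply: open_nbhs_nbhs; split => //; exact: closed_openC.
    move=> /nbhs_ballP[e /= e0 eC].
    set d := `|p|.
    have d0 : 0 <= d := normr_ge0 p.
    have den : 0 < 2 * (2 * d + 1 + e ^+ 2) by rewrite mulr_gt0 // ltr_wpDr ?sqr_ge0 // ltr_wpDl ?mulr_ge0.
    set eta := e ^+ 2 / (2 * (2 * d + 1 + e ^+ 2)).
    have eta0 : 0 < eta by rewrite /eta divr_gt0 // exprn_gt0.
    have heta : eta * (2 * (2 * d + 1 + e ^+ 2)) = e ^+ 2 by rewrite /eta divfK // gt_eqF.
    have [z Cz hz] := dist_adh C x eta C0 eta0.
    rewrite -hyp -/p -/d in hz.
    have py := pyth x p z; rewrite -/q -/d in py.
    have bz := b z Cz.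
    have nz0 := normr_ge0 (x - z).
    have nq0 := normr_ge0 (q - z).
    have e2 : 0 < e ^+ 2 by rewrite exprn_gt0.
    have ee : 0 <= eta * e ^+ 2 by rewrite mulr_ge0 // ltW.
    have ed : 0 <= eta * d by rewrite mulr_ge0 // ltW.
    have : `|q - z| ^+ 2 < e ^+ 2 by nra.
    move=> h; have : `|q - z| < e by nra.
    move=> h'; have : ball q e z by rewrite -ball_normE.
    by move/eC.
  exists c; apply: funext => y.
  have lowb : forall M : R, f y = M%:E -> (support_fun ipH C y <= (M - c)%:E)%E.
    move=> M EM; apply: sig_le => z Cz; rewrite lee_fin.
    by have := L z y Cz; rewrite EM lee_fin; lra.
  have s0 : ((0:R)%:E <= support_fun ipH C y)%E by have := sig_ub C 0 y C00; rewrite ip0l.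
  case Es: (support_fun ipH C y) => [s| |].
  + have s0' : 0 <= s by rewrite Es lee_fin in s0.
    apply/le_anti/andP; split; last first.
      case Efy: (f y) => [fy| |]; rewrite ?leey //; last by have := fN y; rewrite Efy.
      by have := lowb fy Efy; rewrite Es -EFinD !lee_fin; lra.
    rewrite -EFinD leNgt; apply/negP => hlt.
    have [V nV fV] := lsc y _ hlt.
    move: nV => /nbhs_ballP[e /= e0 eV].
    have den : 0 < e ^+ 2 + s + 1 by rewrite -addrA ltr_wpDl ?sqr_ge0 // ltr_pwDr.
    set eps := e ^+ 2 / (e ^+ 2 + s + 1).
    have e2 : 0 < e ^+ 2 by rewrite exprn_gt0.
    have eps0 : 0 < eps by rewrite /eps divr_gt0.
    have heps : eps * (e ^+ 2 + s + 1) = e ^+ 2 by rewrite /eps divfK // gt_eqF.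
    have eps1 : eps < 1 by rewrite /eps ltr_pdivrMr // mul1r -addrA ltr_pwDr // ltr_wpDl.
    set x := eps^-1 *: y.
    have [fp [Efp a b cq]] := step2 x.
    set p := prox f x in Efp a b cq; set q := x - p in a b cq.
    have yp : eps *: q = y - eps *: p.
      by rewrite /q /x scalerBr scalerA mulfV ?gt_eqF // scale1r.
    have qp : eps * ipH q p = ipH q y - eps * `|q| ^+ 2.
      have xq : p = x - q by rewrite /q opprB addrC subrK.
      rewrite {1}xq ipBr /x ipZr mulrBr mulrA mulfV ?gt_eqF // mul1r nrm2 //.
    have := cvx p 0 eps; rewrite eps0 eps1 => /(_ isT).
    rewrite scaler0 addr0 Efp Ec -!EFinM -EFinD => hc.
    have hL := L 0 (eps *: p) C00; rewrite ip0l addr0 in hL.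
    have hq := sig_ub C q y cq; rewrite Es lee_fin in hq.
    have hb : ball y e (eps *: p).
      rewrite -ball_normE /= -yp normrZ gtr0_norm //.
      move: hc hL; case: (f (eps *: p)) => [fz| |] //=; rewrite ?lee_fin => hc hL.
        have hepsa : eps * fp <= eps * (c + ipH q p) by rewrite ler_wpM2l // ltW.
        have nq := normr_ge0 q.
        have hs : eps * `|q| ^+ 2 <= s by nra.
        have : (eps * `|q|) ^+ 2 < e ^+ 2.
          rewrite exprMn; have : eps * s < e ^+ 2 by nra.
          nra.
        move=> h; nra.
    have := fV _ (eV _ hb).
    move: hc hL; case: (f (eps *: p)) => [fz| |] //=; rewrite ?lee_fin ?lte_fin => hc hL h.
      have hepsa : eps * fp <= eps * (c + ipH q p) by rewrite ler_wpM2l // ltW.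
      have nq : 0 <= eps * `|q| ^+ 2 by rewrite mulr_ge0 ?sqr_ge0 // ltW.
      exact: (arith5 hc h hepsa qp hq nq).
  + rewrite addye //.
    case Efy: (f y) => [fy| |] //; last by have := fN y; rewrite Efy.
    by have := lowb fy Efy; rewrite Es leye_eq.
  + by rewrite Es in s0.
- move=> [c fE] x.
  have [hp [fp Efp]] := PS x.
  set p := prox f x in hp Efp *; set q := x - p.
  have sgp := SG x p fp hp Efp.
  have fw : forall w, f w = (support_fun ipH C w + c%:E)%E by rewrite fE.
  have [s Es] : exists s, support_fun ipH C p = s%:E.
    move: Efp; rewrite fw; case: (support_fun ipH C p) => [s| |] //= _; by exists s.
  have fps : fp = s + c by move: Efp; rewrite fw Es -EFinD => -[].
  have s_le : s <= ipH q p.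
    have h1 : (support_fun ipH C (0%R : H) <= (0:R)%:E)%E.
      by apply: sig_le => z _; rewrite ip0r.
    have := sgp 0; rewrite fw => h2.
    have := ecomb h2 h1; rewrite sub0r ipNr; lra.
  have le_s : ipH q p <= s.
    have h1 : (support_fun ipH C (p + p)%R <= (s + s)%:E)%E.
      apply: sig_le => z Cz; rewrite ipDr lee_fin.
      by have := sig_ub C z p Cz; rewrite Es lee_fin => h; lra.
    have := sgp (p + p); rewrite fw => h2.
    have := ecomb h2 h1; rewrite addrK; lra.
  have qC : C q.
    apply: sep => // w; have := sgp w; rewrite fw.
    case: (support_fun ipH C w) => [r| |] //=; rewrite ?leey //.
    by rewrite -EFinD !lee_fin ipBr; lra.
  have xq : x - q = p by rewrite /q opprB addrC subrK.
  apply/le_anti/andP; split; last by have := dist_le C x q qC; rewrite xq.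
  apply: dist_lb => // z Cz.
  have py := pyth x p z; rewrite -/q in py.
  have := sig_ub C z p Cz; rewrite Es lee_fin => hz.
  have n1 := normr_ge0 p; have n2 := normr_ge0 (x - z); have n3 := normr_ge0 (q - z).
  nra.
Qed.

End S.

Theorem corollary1 (R : realType) (H : completeNormedModType R)
  (ipH : inner_product H) (C : set H) (f : H -> \bar R) :
  C !=set0 -> closed C -> convex_subset C -> C 0 ->
  Gamma0 f ->
  ((forall x : H, `|prox f x| = dist_set C x) <->
   (exists c : R, f = (fun x => (support_fun ipH C x + c%:E)%E))).
Proof. exact: main. Qed.
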